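(* Let $a=(w_1,\dots,w_n)$ be a weak CLT sentence in which every $w_i$ is a closed word with first letter $1$. Then $\mathrm{wt}(a)\le 1+\sum_{i=1}^n\frac{\ell(w_i)-2}{2}$.
   Context: A word is a finite sequence $w=(s_1,\dots,s_m)$ of positive integers; $\ell(w)=m$; closed means $s_1=s_m$. Its edges are $E_w=\{\{s_i,s_{i+1}\}:1\le i\le m-1\}$ (undirected, self edges allowed), and $N_e^w=\#\{i\le m-1:\{s_i,s_{i+1}\}=e\}$. A sentence is a finite sequence $a=(w_1,\dots,w_n)$ of words; $\mathrm{wt}(a)$ is the number of distinct letters appearing in $a$, $E_a=\bigcup_i E_{w_i}$, $N_e^a=\sum_iN_e^{w_i}$. $a$ is a weak CLT sentence if (S1) $N_e^a\ge2$ for all $e\in E_a$ and (S2) for every $i$ there is $j\ne i$ with $E_{w_i}\cap E_{w_j}\ne\emptyset$. *)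

(* Defs.v *)
From mathcomp Require Import all_boot all_order all_algebra.
Set Implicit Arguments. Unset Strict Implicit. Unset Printing Implicit Defensive.

Definition word := seq nat.
Definition sentence := seq word.

Definition is_word (w : word) : bool := all (fun s => 0 < s) w.

(* An undirected edge {x,y} is represented canonically as (min x y, max x y). *)
Definition uedge (x y : nat) : nat * nat := (minn x y, maxn x y).

Definition edges_list (w : word) : seq (nat * nat) :=
  match w with
  | [::] => [::]
  | x :: t => pairmap uedge x t
  end.

Definition Ew (w : word) : pred (nat * nat) := fun e => e \in edges_list w.

Definition Nw (w : word) (e : nat * nat) : nat := count_mem e (edges_list w).

Definition closed_word (w : word) : bool :=
  match w with
  | [::] => false
  | x :: t => x == last x t
  end.

Definition starts_with_one (w : word) : bool := head 0 w == 1.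

Definition Ea (a : sentence) : seq (nat * nat) := flatten (map edges_list a).

Definition Na (a : sentence) (e : nat * nat) : nat := \sum_(w <- a) Nw w e.

Definition wt (a : sentence) : nat := size (undup (flatten a)).

Definition weak_CLT (a : sentence) : Prop :=
  (forall e, e \in Ea a -> 2 <= Na a e) /\
  (forall i, i < size a ->
     exists2 j, (j < size a) && (j != i) &
       has (fun e => e \in edges_list (nth [::] a j)) (edges_list (nth [::] a i))).

(* Main.v *)
Require Import Defs.
From mathcomp Require Import all_boot all_order all_algebra zify ring lra.
Set Implicit Arguments. Unset Strict Implicit. Unset Printing Implicit Defensive.

Lemma uedge_change (phi : nat -> bool) x y :
  (phi (uedge x y).1 != phi (uedge x y).2) = (phi x != phi y).
Proof.
rewrite /uedge /minn /maxn /=; case: ltnP => //= _.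
by case: (phi x); case: (phi y).
Qed.

Lemma count_change (phi : nat -> bool) s x :
  odd (count (fun e => phi e.1 != phi e.2) (pairmap uedge x s)) = (phi x != phi (last x s)).
Proof.
elim: s x => [|y s IH] x /=; first by case: (phi x).
rewrite oddD IH uedge_change.
by case: (phi x); case: (phi y); case: (phi (last y s)).
Qed.

Lemma uedge_inv a b c e : uedge a b = uedge c e -> (a = c /\ b = e) \/ (a = e /\ b = c).
Proof. rewrite /uedge => [[h1 h2]]; lia. Qed.

Section Tree.
Variables (P d : nat -> nat) (D : pred nat).
Hypothesis hPd : forall x, D x -> d (P x) < d x.
Variable z : nat.
Hypothesis Dz : D z.

Fixpoint anc k y := match k with 0 => y == z | k'.+1 => (y == z) || (D y && anc k' (P y)) end.

Lemma anc_S k y : d y <= k -> anc k.+1 y = anc k y.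
Proof.
elim: k y => [|k IH] y hy /=.
  case Dy: (D y); [have := hPd Dy; lia | by rewrite /= orbF].
change ((y == z) || (D y && anc k.+1 (P y)) = (y == z) || (D y && anc k (P y))).
case Dy: (D y); last by [].
rewrite IH //; have := hPd Dy; lia.
Qed.

Lemma anc_mono k y : d y <= k -> anc k y = anc (d y) y.
Proof.
elim: k => [|k IH] hy; first by have -> : d y = 0 by lia.
case: (ltngtP (d y) k.+1) => h; [rewrite anc_S; [apply: IH|]; lia | lia | by rewrite h].
Qed.

Definition phi y := anc (d y) y.

Lemma phiD w : D w -> phi w = (w == z) || phi (P w).
Proof.
move=> Dw; rewrite /phi; have h := hPd Dw.
case E: (d w) => [|k]; first lia.
by rewrite /= Dw /= (anc_mono (y := P w)) //; lia.
Qed.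

Lemma anc_le k y : anc k y -> d z <= d y.
Proof.
elim: k y => [|k IH] y /=; first by move/eqP->.
case/orP => [/eqP-> //|/andP[Dy /IH]]; have := hPd Dy; lia.
Qed.

Lemma phiPz : phi (P z) = false.
Proof. apply/negP => /anc_le; have := hPd Dz; lia. Qed.

Lemma uedge_injD y : D y -> uedge (P y) y = uedge (P z) z -> y = z.
Proof.
move=> Dy /uedge_inv [[_ ->] //|[h1 h2]].
have := hPd Dy; rewrite h1; have := hPd Dz; rewrite -h2; lia.
Qed.

Lemma tree_even (X : seq nat) w :
  all D X -> closed_word w ->
  all (fun e => e \in [seq uedge (P x) x | x <- X]) (edges_list w) ->
  ~~ odd (count_mem (uedge (P z) z) (edges_list w)).
Proof.
move=> /allP DX; case: w => [|x t] //= /eqP hx /allP hall.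
rewrite (eq_in_count (a2 := fun e => phi e.1 != phi e.2)).
  by rewrite count_change -hx eqxx.
move=> f /hall /mapP [y yX ->] /=.
rewrite uedge_change (phiD (DX _ yX)).
case yz: (y == z).
  by move/eqP: yz => ->; rewrite eqxx phiPz.
rewrite orFb eqxx; apply/negbTE/negP => /eqP /(uedge_injD (DX _ yX)) /eqP.
by rewrite yz.
Qed.
End Tree.

Lemma sum_bool_count (T : Type) (p : pred T) s : \sum_(x <- s) nat_of_bool (p x) = count p s.
Proof. by elim: s => [|x s IH]; rewrite ?big_nil ?big_cons ?IH. Qed.

Lemma count_mem_sum (T : eqType) (s' s : seq T) : uniq s' ->
  count (mem s') s = \sum_(e <- s') count_mem e s.
Proof.
move=> us; elim: s => [|x s IH] /=.
  by rewrite big1 // => e _.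
rewrite IH big_split /= -count_uniq_mem //.
congr (_ + _); rewrite -sum_bool_count; apply: eq_bigr => e _; by rewrite eq_sym.
Qed.

Lemma comb_lemma n (c : 'I_n -> nat) (K : {set 'I_n}) :
  (forall i, i \in K -> 2 <= c i) ->
  (forall i, i \in K -> exists2 j, j != i & 0 < c j) ->
  2 <= \sum_i c i -> 2 + #|K| <= \sum_i c i.
Proof.
move=> h2 hj hs.
case: (set_0Vmem K) => [->|[i0 i0K]]; first by rewrite cards0 addn0.
have [j ji0 cj] := hj i0 i0K.
rewrite (bigD1 j) //=.
set S := (X in _ <= c j + X).
have hrest : #|K :\ j| * 2 <= S.
  rewrite /S -sum_nat_const big_mkcond [X in _ <= X]big_mkcond /=.
  apply: leq_sum => i _; rewrite in_setD1.
  case: (i != j) => //=; case iK: (i \in K) => //; exact: h2.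
have hc := cardsD1 j K.
have : 0 < #|K :\ j| by apply/card_gt0P; exists i0; rewrite in_setD1 eq_sym ji0.
case jK: (j \in K).
  have := h2 _ jK; rewrite jK /= in hc.
  move: hrest hc; set m := #|K :\ j|; set k := #|K|; move=> *; lia.
rewrite jK /= in hc.
move: hrest hc; set m := #|K :\ j|; set k := #|K|; move=> *; lia.
Qed.

Definition good (w : word) := closed_word w && starts_with_one w.

Lemma good_cons w : good w -> exists t, w = 1 :: t.
Proof. by case: w => [|x t] // /andP[_ /eqP /= ->]; exists t. Qed.

Lemma Ea_cons w a : Ea (w :: a) = edges_list w ++ Ea a.
Proof. by []. Qed.

Lemma edge_in (a : sentence) : (forall w, w \in a -> good w) ->
  forall i, 0 < i < size (flatten a) -> nth 0 (flatten a) i != 1 ->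
  uedge (nth 0 (flatten a) i.-1) (nth 0 (flatten a) i) \in Ea a.
Proof.
elim: a => [|w a IH] ha i hi hn //=; first by move: hi; rewrite /=; lia.
have [t wt] := good_cons (ha w (mem_head _ _)).
move: hi hn; rewrite /= !nth_cat size_cat Ea_cons mem_cat.
case: (ltnP i (size w)) => h1 hi hn.
  rewrite ifT; last lia.
  apply/orP; left; rewrite wt /=.
  have -> : (nth 0 (1 :: t) i) = nth 0 t i.-1 by case: i h1 hi {hn} => [|i]; [lia|].
  rewrite wt in h1.
  have hit : i.-1 < size t by move: h1 => /=; lia.
  by rewrite -(nth_pairmap 0 (0,0) uedge hit 1) mem_nth ?size_pairmap.
case: (ltnP i.-1 (size w)) => h2.
  have ei : i = size w by lia.
  move: hn; rewrite ei subnn.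
  case: a {IH} ha hi => [|w' a'] ha hi /=; first by move: hi; rewrite /= addn0; lia.
  have [t' ->] := good_cons (ha w' ltac:(by rewrite !inE eqxx orbT)).
  by [].
apply/orP; right.
have -> : i.-1 - size w = (i - size w).-1 by lia.
apply: IH; first by move=> v va; apply: ha; rewrite in_cons va orbT.
  by lia.
by [].
Qed.

Lemma sum_const_seq (T : Type) (s : seq T) k : \sum_(x <- s) k = size s * k.
Proof. by elim: s => [|x s IH]; rewrite ?big_nil ?big_cons ?IH //= mulSn. Qed.

Lemma card_sum n (A : {set 'I_n}) : #|A| = \sum_i nat_of_bool (i \in A).
Proof. by rewrite -sum1_card big_mkcond; apply: eq_bigr => i _; case: (i \in A). Qed.

Section S.
Variable a : sentence.
Hypothesis ha : forall w, w \in a -> good w.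

Let L := flatten a.
Definition dd x := index x L.
Definition PP x := nth 0 L (index x L).-1.
Definition DD x := (x \in L) && (x != 1).

Lemma hPd x : DD x -> dd (PP x) < dd x.
Proof.
case/andP=> xL x1; rewrite /dd /PP.
have hi : index x L < size L by rewrite index_mem.
have i0 : index x L != 0.
  apply/eqP => h; move: x1; rewrite -(nth_index 0 xL) h.
  move: hi; rewrite /L; case: a ha => [|w a'] ha' //=.
  have [t ->] := good_cons (ha' w (mem_head _ _)); by [].
have h : (index x L).-1 < size L by lia.
have := index_nth 0 h => h1; apply: (leq_ltn_trans h1); rewrite ltn_predL lt0n i0.
by []. Qed.

Lemma PP_mem x : DD x -> uedge (PP x) x \in Ea a.
Proof.
case/andP=> xL x1.
have := hPd (x := x); rewrite /DD xL x1 /dd => /(_ isT) hd.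
have hi : index x L < size L by rewrite index_mem.
have := @edge_in a ha (index x L); rewrite -/L (nth_index 0 xL).
apply; last by []; lia.
Qed.

Definition X := [seq x <- undup L | x != 1].
Definition Fs := [seq uedge (PP x) x | x <- X].

Lemma allDX : all DD X.
Proof. by apply/allP => x; rewrite mem_filter mem_undup /DD andbC. Qed.

Lemma Fs_uniq : uniq Fs.
Proof.
rewrite map_inj_in_uniq; first by rewrite filter_uniq ?undup_uniq.
move=> x y xX yX h; have /allP hD := allDX.
exact: (uedge_injD hPd (hD y yX) (hD x xX) h).
Qed.

Lemma Fs_sub e : e \in Fs -> e \in Ea a.
Proof. case/mapP => x xX ->; apply: PP_mem; by have /allP := allDX; apply. Qed.

Lemma wt_le : wt a <= size Fs + 1.
Proof.
rewrite /wt size_map /X size_filter -/L.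
have := count_predC (fun x => x != 1) (undup L).
have : count (predC (fun x => x != 1)) (undup L) <= 1.
  rewrite (eq_count (a2 := pred1 1)); last by move=> x /=; rewrite negbK.
  by rewrite count_uniq_mem ?undup_uniq //; case: (_ \in _).
lia.
Qed.

Let n := size a.
Let W i := nth [::] a i.

Lemma countE p : count p (Ea a) = \sum_(i < n) count p (edges_list (W i)).
Proof. by rewrite /Ea count_flatten sumnE !big_map (big_nth [::]) big_mkord. Qed.

Lemma NaE e : Na a e = count_mem e (Ea a).
Proof. by rewrite countE /Na /Nw (big_nth [::]) big_mkord. Qed.

Definition tree i := all (mem Fs) (edges_list (W i)).

Lemma tree_parity (i : 'I_n) e : tree i -> e \in Fs ->
  ~~ odd (count_mem e (edges_list (W i))).
Proof.
move=> ti /mapP [z zX ->].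
have /allP hD := allDX.
apply: (tree_even hPd (hD z zX) allDX); last exact: ti.
have : W i \in a by apply: mem_nth.
by move/ha/andP=> [].
Qed.

Definition K e := [set i : 'I_n | tree i && (e \in edges_list (W i)) &&
   [exists j : 'I_n, (j != i) && (e \in edges_list (W j))]].

Lemma K_bound e : (forall e, e \in Ea a -> 2 <= Na a e) -> e \in Fs -> 2 + #|K e| <= Na a e.
Proof.
move=> S1 eF; have S1e := S1 e (Fs_sub eF).
rewrite NaE countE in S1e *.
apply: comb_lemma => // [i|i].
  rewrite inE => /andP[/andP[ti ei] _].
  have := tree_parity ti eF.
  have : 0 < count_mem e (edges_list (W i)) by rewrite -has_count; apply/hasP; exists e => //=.
  case: (count_mem _ _) => [|[|k]] //.
rewrite inE => /andP[_ /existsP [j /andP[ji ej]]].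
exists j => //; rewrite -has_count; apply/hasP; exists e => //=.
Qed.

Lemma main_count : weak_CLT a -> 2 * size Fs + n <= size (Ea a).
Proof.
case=> S1 S2.
rewrite -[size (Ea a)](count_predC (mem Fs)) count_mem_sum ?Fs_uniq //.
have h1 : \sum_(e <- Fs) (2 + #|K e|) <= \sum_(e <- Fs) count_mem e (Ea a).
  rewrite big_seq [X in _ <= X]big_seq; apply: leq_sum => e eF.
  apply: leq_trans (K_bound S1 eF) _; by rewrite NaE.
have h2 : \sum_(i < n) nat_of_bool (tree i) <= \sum_(e <- Fs) #|K e|.
  have -> : \sum_(e <- Fs) #|K e| = \sum_(e <- Fs) \sum_(i < n) nat_of_bool (i \in K e) by apply: eq_bigr => e _; exact: card_sum.
  rewrite exchange_big /=; apply: leq_sum => i _.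
  rewrite sum_bool_count.
  case ti: (tree i) => //=.
  rewrite -has_count.
  have [j /andP[jn ji] /hasP [e ei ej]] := S2 i (ltn_ord i).
  apply/hasP; exists e; first by move/allP: ti; apply.
  rewrite inE ti ei /=; apply/existsP; exists (Ordinal jn); rewrite ej andbT.
  by apply: contra ji => /eqP <-.
have h3 : \sum_(i < n) nat_of_bool (~~ tree i) <= count (predC (mem Fs)) (Ea a).
  rewrite countE; apply: leq_sum => i _.
  case ti: (tree i) => //=.
  by rewrite -has_count has_predC; move: ti; rewrite /tree => ->.
have h4 : \sum_(i < n) nat_of_bool (tree i) + \sum_(i < n) nat_of_bool (~~ tree i) = n.
  rewrite -big_split /=.
  transitivity (\sum_(i < n) 1); first by apply: eq_bigr => i _; case: (tree i).
  by rewrite sum1_card card_ord.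
rewrite big_split /= sum_const_seq in h1; rewrite -h4 mulnC.
move: h1 h2 h3; set A := \sum_(e <- Fs) count_mem e (Ea a); set B := count _ (Ea a); set Ks := \sum_(e <- Fs) _; set t := \sum_(i < n) _; set nt := \sum_(i < n) _. lia.
Qed.

End S.
Import GRing.Theory Num.Theory.

Lemma sizeEa (a : sentence) : size (Ea a) = \sum_(w <- a) (size w).-1.
Proof.
elim: a => [|w a IH]; first by rewrite big_nil.
by rewrite Ea_cons size_cat IH big_cons; case: w => [|x t] //=; rewrite size_pairmap.
Qed.

Local Open Scope ring_scope.

Lemma sumE (a : sentence) : (forall w, w \in a -> good w) ->
  \sum_(w <- a) (((size w)%:R - 2) / 2 : rat) =
  (((\sum_(w <- a) (size w).-1)%N)%:R - (size a)%:R) / 2.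
Proof.
elim: a => [|w a IH] ha; first by rewrite !big_nil /=; (field; by []).
rewrite !big_cons IH; last by move=> v va; apply: ha; rewrite in_cons va orbT.
have [t ->] := good_cons (ha w (mem_head _ _)).
rewrite /= natrD -addn1 !natrD /=; (field; by []).
Qed.

Theorem mainTheorem4 (a : sentence) :
  all is_word a ->
  weak_CLT a ->
  (forall w, w \in a -> closed_word w && starts_with_one w) ->
  ((wt a)%:R : rat) <= 1 + \sum_(w <- a) (((size w)%:R - 2) / 2).
Proof.
move=> _ hw hc.
have ha : forall w, w \in a -> good w := hc.
have h1 := main_count ha hw.
have h2 := wt_le a.
rewrite sizeEa in h1.
rewrite sumE //.
have H : (2 * wt a + size a <= 2 + \sum_(w <- a) (size w).-1)%N by lia.
move: H; set T := (\sum_(w <- a) (size w).-1)%N => H.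
have H' : ((2 * wt a + size a)%N%:R : rat) <= (2 + T)%N%:R by rewrite ler_nat.
rewrite !natrD ?natrM in H'.
lra.
Qed.
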